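(* Let $q>0$ and let $\{|n_q\rangle\}_{n\ge0}$ be the orthonormal basis of $ML^2(\mathbb{C}\setminus\mathbb{R}_-;q)$ given by \[ |n_q\rangle(z)=\frac{z^{qn}}{\sqrt{\Gamma(qn+1)}}. \] Then: <ol> <li>Each $|n_q\rangle$ lies in the domain of $a^\dagger a$.</li> <li>We have \[ a^\dagger a|n_q\rangle=\begin{cases}\dfrac{\Gamma(qn+1)}{\Gamma(q(n-1)+1)}\,|n_q\rangle, & n\ge1,\\[2mm] 0, & n=0.\end{cases} \]</li> <li>The operator $a^\dagger a$, defined on the linear span of $\{|n_q\rangle\}$ by these relations, extends to a positive self-adjoint operator, again denoted $a^\dagger a$, on its maximal domain.</li> <li>If $f(z)=\sum_{n=0}^\infty a_n z^{qn}$ belongs to $ML^2(\mathbb{C}\setminus\mathbb{R}_-;q)$ and to the domain of $a^\dagger a$, then \[ (a^\dagger a f)(z)=\sum_{n=1}^\infty a_n\frac{\Gamma(qn+1)}{\Gamma(q(n-1)+1)}\,z^{qn}. \]</li> </ol>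
   Context: Fix $q>0$. The Mittag-Leffler space of the slitted plane is \[ ML^2(\mathbb{C}\setminus\mathbb{R}_-;q)=\Big\{f:\mathbb{C}\setminus\mathbb{R}_-\to\mathbb{C},\ f(z)=\sum_{n\ge0}a_nz^{qn}\ :\ \sum_{n\ge0}|a_n|^2\Gamma(qn+1)<\infty\Big\}, \] with the principal branch of $z^{qn}$ on $\mathbb{C}\setminus(-\infty,0]$. Its scalar product is \[ \langle f,g\rangle=\sum_{n\ge0}\overline{a_n}\,b_n\,\Gamma(qn+1) \] for $f=\sum a_nz^{qn}$ and $g=\sum b_nz^{qn}$. For $f=\sum a_n z^{qn}$, the Caputo fractional derivative of order $q$ is \[ D^q_*f(z)=\sum_{n\ge1}a_n\frac{\Gamma(qn+1)}{\Gamma(q(n-1)+1)}z^{q(n-1)}, \] defined whenever $\sum_{n\ge1}|a_n|^2\,\big|\Gamma(qn+1)/\Gamma(q(n-1)+1)\big|^2<\infty$. The creation and annihilation operators are defined as follows: <ul> <li>$a^\dagger f=z^q f$ on $\operatorname{Dom}(a^\dagger)=\{f\in ML^2(\mathbb{C}\setminus\mathbb{R}_-;q): z^qf\in ML^2(\mathbb{C}\setminus\mathbb{R}_-;q)\}$;</li> <li>$af=D^q_*f$ on $\operatorname{Dom}(a)=\{f\in ML^2(\mathbb{C}\setminus\mathbb{R}_-;q): D^q_*f\in ML^2(\mathbb{C}\setminus\mathbb{R}_-;q)\}$.</li> </ul> These are closed, densely defined and mutually adjoint. The operator $a^\dagger a$ is defined on $\{f\in\operatorname{Dom}(a): af\in\operatorname{Dom}(a^\dagger)\}$.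 *)

(* Defs.v *)
From Stdlib Require Import Reals.
From Coquelicot Require Import Coquelicot.
Open Scope R_scope.

Definition Gamma (x : R) : R :=
  RInt_gen (fun t => Rpower t (x - 1) * exp (- t))
           (at_right 0) (Rbar_locally p_infty).

Definition wq (q : R) (n : nat) : R := Gamma (q * INR n + 1).

(** An element f(z) = sum_n a_n z^(q n) of ML^2(C \ R_-; q) is represented by its
    coefficient sequence a : nat -> C. *)
Definition coeffs := nat -> C.

Definition inML2 (q : R) (a : coeffs) : Prop :=
  ex_series (fun n => (Cmod (a n)) ^ 2 * wq q n).

Definition ipML2 (q : R) (a b : coeffs) : C :=
  (Series (fun n => Re (Cmult (Cconj (a n)) (b n)) * wq q n),
   Series (fun n => Im (Cmult (Cconj (a n)) (b n)) * wq q n)).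

Definition normML2 (q : R) (a : coeffs) : R :=
  sqrt (Series (fun n => (Cmod (a n)) ^ 2 * wq q n)).

Definition ket (q : R) (n : nat) : coeffs :=
  fun m => if Nat.eqb m n then RtoC (/ sqrt (wq q n)) else RtoC 0.

Definition lam (q : R) (n : nat) : R := wq q n / wq q (n - 1).

(** Creation operator a^dagger f = z^q f: on coefficients, a shift. *)
Definition adag (a : coeffs) : coeffs :=
  fun n => match n with O => RtoC 0 | S m => a m end.
Definition dom_adag (q : R) (a : coeffs) : Prop :=
  inML2 q a /\ inML2 q (adag a).

(** Caputo derivative D^q_* : coefficient of z^(q(n-1)) is a_n Gamma(qn+1)/Gamma(q(n-1)+1). *)
Definition caputo (q : R) (a : coeffs) : coeffs :=
  fun n => Cmult (a (S n)) (RtoC (lam q (S n))).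
Definition caputo_defined (q : R) (a : coeffs) : Prop :=
  ex_series (fun n => (Cmod (a (S n))) ^ 2 * (Rabs (lam q (S n))) ^ 2).

(** Annihilation operator a f = D^q_* f. *)
Definition dom_a (q : R) (a : coeffs) : Prop :=
  inML2 q a /\ caputo_defined q a /\ inML2 q (caputo q a).

Definition dom_adag_a (q : R) (a : coeffs) : Prop :=
  dom_a q a /\ dom_adag q (caputo q a).
Definition adag_a (q : R) (a : coeffs) : coeffs := adag (caputo q a).

Definition densely_defined (q : R) (D : coeffs -> Prop) : Prop :=
  (forall f, D f -> inML2 q f) /\
  (forall f, inML2 q f -> forall eps, 0 < eps ->
     exists g, D g /\ normML2 q (fun n => Cminus (f n) (g n)) < eps).

(** Self-adjointness: densely defined, symmetric, and the adjoint's domain is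
    contained in D with T^* = T there (i.e. D = Dom(T adjoint), T = T adjoint). *)
Definition self_adjoint (q : R) (D : coeffs -> Prop) (T : coeffs -> coeffs) : Prop :=
  densely_defined q D /\
  (forall g, D g -> inML2 q (T g)) /\
  (forall f g, D f -> D g -> ipML2 q g (T f) = ipML2 q (T g) f) /\
  (forall g h, inML2 q g -> inML2 q h ->
     (forall f, D f -> ipML2 q g (T f) = ipML2 q h f) -> D g /\ h = T g).

Definition positive_op (q : R) (D : coeffs -> Prop) (T : coeffs -> coeffs) : Prop :=
  forall f, D f -> Im (ipML2 q f (T f)) = 0 /\ 0 <= Re (ipML2 q f (T f)).

Definition combo (q : R) (N : nat) (c : nat -> C) : coeffs :=
  fun m => sum_n (fun k => Cmult (c k) (ket q k m)) N.

Definition eig (q : R) (n : nat) : R :=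
  match n with O => 0 | S _ => lam q n end.

(** The operator defined on the span by these relations, taken on its maximal domain:
    f = sum a_n z^(qn)  |->  sum eig(n) a_n z^(qn), whenever both lie in ML^2. *)
Definition Tmax (q : R) (a : coeffs) : coeffs := fun n => Cmult (RtoC (eig q n)) (a n).
Definition Dmax (q : R) (a : coeffs) : Prop := inML2 q a /\ inML2 q (Tmax q a).

(* Main.v *)
Require Import Defs.
From Stdlib Require Import Reals.
From Coquelicot Require Import Coquelicot.
From Stdlib Require Import Lra Lia Classical FunctionalExtensionality.
Open Scope R_scope.

Definition gf (x t : R) := Rpower t (x - 1) * exp (- t).

Lemma exp_mono a b : a <= b -> exp a <= exp b.
Proof. intros [H|H]. left; apply exp_increasing; auto. subst; lra. Qed.

Lemma exp_ge1 a : 0 <= a -> 1 <= exp a.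
Proof. intros; rewrite <- exp_0; apply exp_mono; auto. Qed.
Lemma exp_le1 a : a <= 0 -> exp a <= 1.
Proof. intros; rewrite <- exp_0; apply exp_mono; auto. Qed.

Lemma gf_cont x t : 0 < t -> continuous (gf x) t.
Proof. intros Ht. apply (@ex_derive_continuous R_AbsRing R_NormedModule). unfold gf, Rpower. auto_derive. auto. Qed.

Lemma gf_int x a b : 0 < a -> 0 < b -> ex_RInt (gf x) a b.
Proof.
  intros. apply (ex_RInt_continuous (V:=R_CompleteNormedModule)). intros z Hz. apply gf_cont.
  assert (0 < Rmin a b) by (apply Rmin_glb_lt; auto). lra.
Qed.

Lemma gf_pos x t : 0 <= gf x t.
Proof. unfold gf, Rpower. apply Rmult_le_pos; left; apply exp_pos. Qed.

Lemma ln_le_2sqrt t : 0 < t -> ln t <= 2 * sqrt t.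
Proof.
  intros Ht. assert (Hs : 0 < sqrt t) by (apply sqrt_lt_R0; auto).
  rewrite <- (sqrt_sqrt t) at 1 by lra. rewrite ln_mult by auto.
  pose proof (exp_ineq1_le (ln (sqrt t))). rewrite exp_ln in H by auto. lra.
Qed.

Lemma gf_bound x t : 1 <= x -> 0 < t -> gf x t <= exp (2*(x-1)^2) * exp (- t / 2).
Proof.
  intros hx Ht. unfold gf, Rpower. rewrite <- !exp_plus.
  apply exp_mono.
  pose proof (ln_le_2sqrt t Ht). assert (Hs : 0 <= sqrt t) by apply sqrt_pos.
  pose proof (sqrt_sqrt t (Rlt_le _ _ Ht)).
  assert ((x-1) * ln t <= (x-1) * (2 * sqrt t)) by (apply Rmult_le_compat_l; lra).
  pose proof (pow2_ge_0 (sqrt t - 2*(x-1))). nra.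
Qed.

Lemma gf_lb x t : 1 <= x -> 1 <= t <= 2 -> exp (-2) <= gf x t.
Proof.
  intros hx Ht. unfold gf, Rpower.
  assert (0 <= ln t) by (rewrite <- ln_1; apply ln_le; lra).
  assert (1 <= exp ((x-1) * ln t)) by (apply exp_ge1; apply Rmult_le_pos; lra).
  assert (exp (-2) <= exp (-t)) by (apply exp_mono; lra).
  pose proof (exp_pos (-2)). nra.
Qed.

Lemma gf_upper x b : 1 <= x -> 1 <= b -> RInt (gf x) 1 b <= 2 * exp (2*(x-1)^2).
Proof.
  intros hx hb. set (K := exp (2*(x-1)^2)).
  set (g := fun t => K * exp (- t / 2)).
  set (F := fun t => -2 * K * exp (- t / 2)).
  assert (HI : is_RInt g 1 b (minus (F b) (F 1))).
  { apply (is_RInt_derive (V:=R_CompleteNormedModule)).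
    - intros t _. unfold F, g. auto_derive; auto. unfold Rdiv; field.
    - intros t _. apply (ex_derive_continuous (V:=R_NormedModule)). unfold g. auto_derive. auto. }
  apply Rle_trans with (RInt g 1 b).
  - apply RInt_le; auto.
    + apply gf_int; lra.
    + eexists; eauto.
    + intros t Ht. apply gf_bound; lra.
  - rewrite (is_RInt_unique _ _ _ _ HI). unfold minus, plus, opp, F; simpl.
    assert (exp (-1/2) <= 1) by (apply exp_le1; lra).
    pose proof (exp_pos (-b/2)). assert (0 < K) by apply exp_pos.
    replace (- (1) / 2) with (-1/2) by field. nra.
Qed.

Lemma gf_lower x a : 1 <= x -> 0 < a <= 1 -> RInt (gf x) a 1 <= exp (2*(x-1)^2).
Proof.
  intros hx ha. set (K := exp (2*(x-1)^2)). assert (0 < K) by apply exp_pos.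
  apply Rle_trans with (RInt (fun _ => K) a 1).
  - apply RInt_le; try lra.
    + apply gf_int; lra.
    + apply ex_RInt_const.
    + intros t Ht. apply Rle_trans with (K * exp (-t/2)). apply gf_bound; lra.
      assert (exp (-t/2) <= 1) by (apply exp_le1; lra). nra.
  - rewrite RInt_const. unfold scal; simpl; unfold mult; simpl. nra.
Qed.

Lemma up_mono x b0 b : 1 <= b0 <= b -> RInt (gf x) 1 b0 <= RInt (gf x) 1 b.
Proof.
  intros H. rewrite <- (RInt_Chasles (gf x) 1 b0 b) by (apply gf_int; lra).
  unfold plus; simpl.
  assert (0 <= RInt (gf x) b0 b) by (apply RInt_ge_0; [lra | apply gf_int; lra | intros; apply gf_pos]).
  lra.
Qed.

Lemma low_mono x a a0 : 0 < a <= a0 -> RInt (gf x) a0 1 <= RInt (gf x) a 1.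
Proof.
  intros H. rewrite <- (RInt_Chasles (gf x) a a0 1) by (apply gf_int; lra).
  unfold plus; simpl.
  assert (0 <= RInt (gf x) a a0) by (apply RInt_ge_0; [lra | apply gf_int; lra | intros; apply gf_pos]).
  lra.
Qed.

Lemma lub_approx E m eps : is_lub E m -> 0 < eps -> exists y, E y /\ m - eps < y.
Proof.
  intros [Hub Hl] He. apply NNPP; intro H.
  assert (is_upper_bound E (m - eps)).
  { intros y Hy. apply Rnot_lt_le. intro. apply H. eauto. }
  specialize (Hl _ H0). lra.
Qed.

Lemma Gamma_lb x : 1 <= x -> exp (-2) <= Gamma x.
Proof.
  intros hx.
  set (K := exp (2*(x-1)^2)).
  set (E1 := fun y => exists a, 0 < a <= 1 /\ y = RInt (gf x) a 1).
  set (E2 := fun y => exists b, 1 <= b /\ y = RInt (gf x) 1 b).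
  assert (B1: bound E1) by (exists K; intros y [a [Ha ->]]; apply gf_lower; auto).
  assert (N1: exists y, E1 y) by (exists (RInt (gf x) 1 1); exists 1; split; [lra|auto]).
  assert (B2: bound E2) by (exists (2*K); intros y [b [Hb ->]]; apply gf_upper; auto).
  assert (N2: exists y, E2 y) by (exists (RInt (gf x) 1 1); exists 1; split; [lra|auto]).
  destruct (completeness E1 B1 N1) as [l1 H1].
  destruct (completeness E2 B2 N2) as [l2 H2].
  assert (HG : is_RInt_gen (gf x) (at_right 0) (Rbar_locally p_infty) (l1 + l2)).
  { apply filterlimi_lim_ext_loc with (f := fun ab => RInt (gf x) (fst ab) (snd ab)).
    - exists (fun a => 0 < a) (fun b => 0 < b).
      + exists (mkposreal 1 Rlt_0_1). intros; auto.
      + exists 0. auto.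
      + intros a b Ha Hb. simpl. apply (RInt_correct (V:=R_CompleteNormedModule)), gf_int; auto.
    - apply filterlim_locally. intros [eps Heps]. simpl.
      destruct (lub_approx E1 l1 (eps/2)) as [y1 [[a0 [Ha0 ->]] Hy1]]; [auto|lra|].
      destruct (lub_approx E2 l2 (eps/2)) as [y2 [[b0 [Hb0 ->]] Hy2]]; [auto|lra|].
      exists (fun a => 0 < a <= a0) (fun b => b0 < b).
      + exists (mkposreal a0 (proj1 Ha0)). intros y Hy Hy0. split; auto.
        unfold ball in Hy; simpl in Hy; unfold AbsRing_ball, abs, minus, plus, opp in Hy; simpl in Hy.
        apply Rabs_def2 in Hy. lra.
      + exists b0. auto.
      + intros a b Ha Hb. simpl.
        rewrite <- (RInt_Chasles (gf x) a 1 b) by (apply gf_int; lra).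
        assert (RInt (gf x) a 1 <= l1) by (apply (proj1 H1); exists a; split; [lra|auto]).
        assert (RInt (gf x) 1 b <= l2) by (apply (proj1 H2); exists b; split; [lra|auto]).
        pose proof (low_mono x a a0 Ha).
        pose proof (up_mono x b0 b (conj Hb0 (Rlt_le _ _ Hb))).
        unfold ball; simpl; unfold AbsRing_ball, abs, minus, plus, opp; simpl.
        apply Rabs_def1; lra. }
  unfold Gamma. change (fun t => Rpower t (x - 1) * exp (- t)) with (gf x).
  rewrite (is_RInt_gen_unique _ _ HG).
  assert (0 <= l1).
  { apply Rle_trans with (RInt (gf x) 1 1). rewrite RInt_point; right; reflexivity.
    apply (proj1 H1). exists 1; split; [lra|auto]. }
  assert (exp (-2) <= l2).
  { apply Rle_trans with (RInt (gf x) 1 2).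
    - apply Rle_trans with (RInt (fun _ => exp (-2)) 1 2).
      + rewrite RInt_const. unfold scal; simpl; unfold mult; simpl. lra.
      + apply RInt_le; try lra. apply ex_RInt_const. apply gf_int; lra.
        intros t Ht. apply gf_lb; lra.
    - apply (proj1 H2). exists 2; split; [lra|auto]. }
  lra.
Qed.

Lemma is_series_zero : is_series (fun _ : nat => 0) 0.
Proof.
  assert (H : Rabs 0 < 1) by (rewrite Rabs_R0; lra).
  pose proof (is_series_scal_r 0 _ _ (is_series_geom 0 H)).
  eapply is_series_ext in H0. rewrite Rmult_0_r in H0. exact H0.
  intros n; simpl; ring.
Qed.

Lemma sum_n_zeros (a : nat -> R) N : (forall n, (n <= N)%nat -> a n = 0) -> sum_n a N = 0.
Proof.
  induction N; intros H.
  - rewrite sum_O. apply H; lia.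
  - rewrite sum_Sn, IHN by (intros; apply H; lia). rewrite H by lia.
    unfold plus; simpl; ring.
Qed.

Lemma ev0_is (a : nat -> R) N : (forall m, (N < m)%nat -> a m = 0) -> is_series a (sum_n a N).
Proof.
  intros H. apply (is_series_decr_n a (S N)); [lia|]. simpl pred.
  unfold plus, opp; simpl. rewrite Rplus_opp_r.
  eapply is_series_ext; [|apply is_series_zero].
  intros k; simpl. rewrite H by lia. reflexivity.
Qed.

Lemma ev0 (a : nat -> R) N : (forall m, (N < m)%nat -> a m = 0) -> ex_series a.
Proof. intros H. eexists. apply (ev0_is a N H). Qed.

Lemma single_series (a : nat -> R) k : (forall m, m <> k -> a m = 0) -> Series a = a k.
Proof.
  intros H. rewrite (is_series_unique _ _ (ev0_is a k (fun m Hm => H m ltac:(lia)))).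
  destruct k.
  - apply sum_O.
  - rewrite sum_Sn, sum_n_zeros by (intros; apply H; lia). unfold plus; simpl; ring.
Qed.

Lemma wq_lb q n : 0 < q -> exp (-2) <= wq q n.
Proof. intros. unfold wq. apply Gamma_lb. pose proof (pos_INR n). nra. Qed.

Lemma wq_pos q n : 0 < q -> 0 < wq q n.
Proof. intros. eapply Rlt_le_trans; [apply exp_pos | apply wq_lb; auto]. Qed.

Lemma ket_zero q n m : m <> n -> ket q n m = RtoC 0.
Proof. intros. unfold ket. destruct (Nat.eqb_spec m n); congruence. Qed.

Lemma Cmod_R0 : Cmod (RtoC 0) = 0.
Proof. apply Cmod_0. Qed.

Lemma Cmult0l z : Cmult (RtoC 0) z = RtoC 0.
Proof. apply Cmult_0_l. Qed.

Lemma part1 q n : dom_adag_a q (ket q n).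
Proof.
  unfold dom_adag_a, dom_a, dom_adag, inML2, caputo_defined.
  repeat split.
  - apply (ev0 _ n). intros m Hm. rewrite ket_zero by lia. rewrite Cmod_R0. ring.
  - apply (ev0 _ n). intros m Hm. rewrite ket_zero by lia. rewrite Cmod_R0. ring.
  - apply (ev0 _ n). intros m Hm. unfold caputo. rewrite ket_zero by lia. rewrite Cmult0l, Cmod_R0. ring.
  - apply (ev0 _ n). intros m Hm. unfold caputo. rewrite ket_zero by lia. rewrite Cmult0l, Cmod_R0. ring.
  - apply (ev0 _ n). intros m Hm. destruct m as [|m]; [lia|]. unfold adag, caputo.
    rewrite ket_zero by lia. rewrite Cmult0l, Cmod_R0. ring.
Qed.

Lemma part2 q n : adag_a q (ket q n) = match n with O => fun _ => RtoC 0 | S _ => fun m => Cmult (RtoC (wq q n / wq q (n - 1))) (ket q n m) end.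
Proof.
  apply functional_extensionality; intros m.
  unfold adag_a, adag, caputo.
  destruct n as [|n']; destruct m as [|m].
  - reflexivity.
  - rewrite ket_zero by lia. apply Cmult0l.
  - rewrite (ket_zero q (S n') 0) by lia. rewrite Cmult_0_r. reflexivity.
  - destruct (Nat.eq_dec m n').
    + subst. unfold lam. rewrite Cmult_comm. reflexivity.
    + rewrite !ket_zero by lia. rewrite Cmult0l, Cmult_0_r. reflexivity.
Qed.

Lemma sum_n_zerosG {G : AbelianMonoid} (a : nat -> G) N : (forall n, (n <= N)%nat -> a n = zero) -> sum_n a N = zero.
Proof.
  induction N; intros H.
  - rewrite sum_O. apply H; lia.
  - rewrite sum_Sn, IHN by (intros; apply H; lia). rewrite H by lia.
    apply plus_zero_r.
Qed.

Lemma combo_zero q N c m : (N < m)%nat -> combo q N c m = RtoC 0.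
Proof.
  intros Hm. unfold combo. apply (sum_n_zerosG (G:=C_AbelianMonoid)).
  intros k Hk. rewrite ket_zero by lia. apply Cmult_0_r.
Qed.

Lemma Cmult_sum r (u : nat -> C) N : Cmult r (sum_n u N) = sum_n (fun k => Cmult r (u k)) N.
Proof.
  induction N.
  - rewrite !sum_O. reflexivity.
  - rewrite !sum_Sn, <- IHN. unfold plus; simpl. ring.
Qed.

Lemma adag_a_Tmax q f : adag_a q f = Tmax q f.
Proof.
  apply functional_extensionality; intros [|m]; unfold adag_a, adag, caputo, Tmax, eig.
  - rewrite Cmult0l. reflexivity.
  - apply Cmult_comm.
Qed.

Lemma Cmod_sq z : Cmod z ^ 2 = Re z ^ 2 + Im z ^ 2.
Proof. destruct z as [a b]. unfold Cmod, Re, Im; simpl fst; simpl snd. rewrite pow2_sqrt; auto. pose proof (pow2_ge_0 a); pose proof (pow2_ge_0 b). lra. Qed.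

Lemma part3a q N c : Dmax q (combo q N c) /\
      Tmax q (combo q N c) = combo q N (fun k => Cmult (c k) (RtoC (eig q k))).
Proof.
  split.
  - split; apply (ev0 _ N); intros m Hm; unfold Tmax; rewrite combo_zero by lia.
    + rewrite Cmod_R0; ring.
    + rewrite Cmult_0_r, Cmod_R0; ring.
  - apply functional_extensionality; intros m. unfold Tmax, combo.
    rewrite Cmult_sum. apply sum_n_ext. intros k.
    destruct (Nat.eq_dec k m).
    + subst. match goal with |- ?a = ?b => change (@eq C a b) end. ring.
    + rewrite ket_zero by lia. rewrite !Cmult_0_r. reflexivity.
Qed.

Lemma sqrt_lt_eps x eps : 0 < eps -> x < eps ^ 2 -> sqrt x < eps.
Proof.
  intros He Hx. destruct (Rle_or_lt x 0).
  - rewrite sqrt_neg_0 by auto. auto.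
  - rewrite <- (sqrt_pow2 eps) by lra. apply sqrt_lt_1_alt. lra.
Qed.

Lemma dense q : densely_defined q (Dmax q).
Proof.
  split; [intros f [H _]; exact H|].
  intros f Hf eps Heps.
  set (A := fun n => Cmod (f n) ^ 2 * wq q n).
  assert (He2 : 0 < eps ^ 2) by (apply pow_lt; auto).
  destruct (proj1 (filterlim_locally _ _) (Series_correct _ Hf) (mkposreal _ He2)) as [N HN].
  specialize (HN N (le_n N)).
  change (Rabs (sum_n A N - Series A) < eps^2) in HN.
  set (g := fun n => if (n <=? N)%nat then f n else RtoC 0).
  exists g. split.
  - split; apply (ev0 _ N); intros m Hm; unfold Tmax, g;
      replace (m <=? N)%nat with false by (symmetry; apply Nat.leb_gt; lia).
    + rewrite Cmod_R0; ring.
    + rewrite Cmult_0_r, Cmod_R0; ring.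
  - unfold normML2. apply sqrt_lt_eps; auto.
    set (B := fun n => Cmod (Cminus (f n) (g n)) ^ 2 * wq q n).
    assert (EB : Series B = Series (fun k => A (S N + k)%nat)).
    { rewrite (Series_incr_n_aux B (S N)).
      - apply Series_ext. intros k. unfold B, A, g.
        replace (S N + k <=? N)%nat with false by (symmetry; apply Nat.leb_gt; lia).
        f_equal. f_equal. f_equal. unfold Cminus. rewrite Copp_0, Cplus_0_r. reflexivity.
      - intros k Hk. unfold B, g. replace (k <=? N)%nat with true by (symmetry; apply Nat.leb_le; lia).
        unfold Cminus. rewrite Cplus_opp_r, Cmod_R0. ring. }
    change (Series B < eps ^ 2). rewrite EB.
    rewrite (Series_incr_n A (S N)) in HN by (auto; lia). simpl pred in HN.
    rewrite <- sum_n_Reals in HN. apply Rabs_def2 in HN. lra.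
Qed.

Lemma eig_nonneg q n : 0 < q -> 0 <= eig q n.
Proof.
  intros hq. destruct n; simpl. lra. unfold lam.
  pose proof (wq_pos q (S n) hq). pose proof (wq_pos q (S n - 1) hq).
  apply Rlt_le, Rdiv_lt_0_compat; auto.
Qed.

Lemma symm q f g : ipML2 q g (Tmax q f) = ipML2 q (Tmax q g) f.
Proof.
  unfold ipML2, Tmax. f_equal; apply Series_ext; intros n;
  destruct (f n) as [a b]; destruct (g n) as [c d]; simpl; ring.
Qed.

Definition unitv (k : nat) : coeffs := fun m => if Nat.eqb m k then RtoC 1 else RtoC 0.

Lemma unitv_zero k m : m <> k -> unitv k m = RtoC 0.
Proof. intros. unfold unitv. destruct (Nat.eqb_spec m k); congruence. Qed.

Lemma maximal q (hq : 0 < q) g h : inML2 q g -> inML2 q h ->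
     (forall f, Dmax q f -> ipML2 q g (Tmax q f) = ipML2 q h f) -> Dmax q g /\ h = Tmax q g.
Proof.
  intros Hg Hh H.
  assert (Eh : h = Tmax q g).
  { apply functional_extensionality; intros k.
    assert (Dk : Dmax q (unitv k)).
    { split; apply (ev0 _ k); intros m Hm; unfold Tmax; rewrite unitv_zero by lia.
      + rewrite Cmod_R0; ring.
      + rewrite Cmult_0_r, Cmod_R0; ring. }
    specialize (H _ Dk). unfold ipML2 in H.
    pose proof (f_equal fst H) as H1. pose proof (f_equal snd H) as H2. simpl in H1, H2.
    rewrite !(single_series _ k) in H1 by
      (intros m Hm; unfold Tmax; rewrite unitv_zero by auto;
       destruct (g m); destruct (h m); simpl; ring).
    rewrite !(single_series _ k) in H2 by
      (intros m Hm; unfold Tmax; rewrite unitv_zero by auto;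
       destruct (g m); destruct (h m); simpl; ring).
    unfold Tmax, unitv in *. rewrite Nat.eqb_refl in H1, H2.
    pose proof (wq_pos q k hq) as Hw.
    destruct (g k) as [a b]; destruct (h k) as [c d]; simpl in *.
    apply Rmult_eq_reg_r in H1; [|lra]. apply Rmult_eq_reg_r in H2; [|lra].
    unfold Cmult, RtoC; simpl. f_equal; nra. }
  split; [split; auto|]; [rewrite <- Eh; auto | auto].
Qed.

Lemma Cmod_sq' z : Cmod z * (Cmod z * 1) = fst z * fst z + snd z * snd z.
Proof. pose proof (Cmod_sq z). simpl in H. unfold Re, Im in H. rewrite H. ring. Qed.

Lemma posop q (hq : 0 < q) : positive_op q (Dmax q) (Tmax q).
Proof.
  intros f [Hf HT]. unfold ipML2; simpl. split.
  - rewrite (Series_ext _ (fun _ => 0)).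
    + apply is_series_unique, is_series_zero.
    + intros n. unfold Tmax. destruct (f n); simpl; ring.
  - apply Rle_trans with (Series (fun _ => 0)).
    { right. symmetry. apply is_series_unique, is_series_zero. }
    apply Series_le.
    + intros n. pose proof (eig_nonneg q n hq). pose proof (wq_pos q n hq).
      unfold Tmax. destruct (f n) as [a b]; simpl. split; [lra|].
      apply Rmult_le_pos; [|lra]. nra.
    + eapply (ex_series_le (K:=R_AbsRing) (V:=R_CompleteNormedModule)); [|apply (ex_series_plus _ _ Hf HT)].
      intros n. pose proof (eig_nonneg q n hq). pose proof (wq_pos q n hq).
      unfold norm; simpl; unfold abs; simpl; unfold plus; simpl.
      rewrite !Cmod_sq'. unfold Tmax. destruct (f n) as [a b]; simpl.
      set (e := eig q n) in *. set (w := wq q n) in *.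
      assert (0 <= (a*a+b*b) * e * w) by (apply Rmult_le_pos; [|lra]; nra).
      rewrite Rabs_pos_eq.
      * assert (e <= 1 + e^2) by nra.
        assert (0 <= (a*a+b*b) * w * (1 + e^2 - e)) by (apply Rmult_le_pos; nra).
        nra.
      * nra.
Qed.

Lemma dom_equiv q (hq : 0 < q) f : dom_adag_a q f <-> Dmax q f.
Proof.
  split.
  - intros [[Hf _] [_ Ha]]. split; auto. change (inML2 q (adag_a q f)) in Ha.
    rewrite adag_a_Tmax in Ha. exact Ha.
  - intros [Hf HT].
    assert (HA : inML2 q (adag (caputo q f))).
    { change (inML2 q (adag_a q f)). rewrite adag_a_Tmax. exact HT. }
    assert (HT1 := proj1 (ex_series_incr_1 _) HT).
    assert (Hf1 := proj1 (ex_series_incr_1 _) Hf).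
    assert (HC : inML2 q (caputo q f)).
    { eapply (ex_series_le (K:=R_AbsRing) (V:=R_CompleteNormedModule));
        [|apply (ex_series_plus _ _ Hf1 HT1)].
      intros n. pose proof (wq_pos q n hq). pose proof (wq_pos q (S n) hq).
      unfold norm; simpl; unfold abs; simpl; unfold plus; simpl.
      rewrite !Cmod_sq'. unfold Tmax, caputo, eig, lam. replace (S n - 1)%nat with n by lia.
      destruct (f (S n)) as [a b]; simpl.
      set (w0 := wq q n) in *. set (w1 := wq q (S n)) in *.
      set (L := w1 / w0).
      assert (HL : 0 <= L) by (apply Rlt_le, Rdiv_lt_0_compat; auto).
      assert (Hw1 : w1 = L * w0) by (unfold L; field; lra).
      rewrite Hw1.
      assert (Hs : 0 <= a*a+b*b) by nra.
      assert (0 <= (a*a+b*b) * w0 * L * (1 + L^2 - L)) by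
        (apply Rmult_le_pos; [apply Rmult_le_pos; [apply Rmult_le_pos|]|]; nra).
      rewrite Rabs_pos_eq.
      + nra.
      + apply Rmult_le_pos; [|lra]. nra. }
    assert (HD : caputo_defined q f).
    { unfold caputo_defined.
      eapply (ex_series_le (K:=R_AbsRing) (V:=R_CompleteNormedModule));
        [|apply (ex_series_scal (exp 2) _ HT1)].
      intros n. pose proof (wq_lb q (S n) hq).
      unfold norm; simpl; unfold abs; simpl; unfold scal; simpl; unfold mult; simpl.
      rewrite !Cmod_sq'.
      assert (Eabs : forall x, Rabs x * (Rabs x * 1) = x * x)
        by (intros x; rewrite Rmult_1_r, <- Rabs_mult; apply Rabs_pos_eq; nra).
      rewrite Eabs.
      unfold Tmax, eig.
      destruct (f (S n)) as [a b]; simpl.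
      set (w1 := wq q (S n)) in *. set (L := lam q (S n)).
      assert (Hs : 0 <= (a*a+b*b) * (L*L)) by (apply Rmult_le_pos; nra).
      assert (exp 2 * exp (-2) = 1) by (rewrite <- exp_plus; replace (2 + -2) with 0 by ring; apply exp_0).
      pose proof (exp_pos 2).
      rewrite Rabs_pos_eq by nra.
      assert ((a*a+b*b) * (L*L) * (exp 2 * exp (-2)) <= (a*a+b*b) * (L*L) * (exp 2 * w1))
        by (apply Rmult_le_compat_l; auto; apply Rmult_le_compat_l; lra).
      nra. }
    split; [split; [auto|split; auto]| split; auto].
Qed.

Theorem mainTheorem3 (q : R) (hq : 0 < q) :
  (* 1. each |n_q> lies in Dom(a^dagger a) *)
  (forall n : nat, dom_adag_a q (ket q n)) /\
  (* 2. eigenvalue relations *)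
  (forall n : nat,
     adag_a q (ket q n) =
     match n with
     | O => fun _ => RtoC 0
     | S _ => fun m => Cmult (RtoC (wq q n / wq q (n - 1))) (ket q n m)
     end) /\
  (* 3. the operator defined on span{|n_q>} by these relations extends to a positive
        self-adjoint operator on its maximal domain, which is a^dagger a *)
  ((forall (N : nat) (c : nat -> C),
      Dmax q (combo q N c) /\
      Tmax q (combo q N c) = combo q N (fun k => Cmult (c k) (RtoC (eig q k)))) /\
   self_adjoint q (Dmax q) (Tmax q) /\
   positive_op q (Dmax q) (Tmax q) /\
   (forall f, dom_adag_a q f <-> Dmax q f) /\
   (forall f, dom_adag_a q f -> adag_a q f = Tmax q f)) /\
  (* 4. formula for a^dagger a on its domain:
        (a^dagger a f)(z) = sum_{n>=1} a_n Gamma(qn+1)/Gamma(q(n-1)+1) z^(qn) *)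
  (forall f : coeffs, inML2 q f -> dom_adag_a q f ->
     adag_a q f = fun n => match n with
                           | O => RtoC 0
                           | S _ => Cmult (f n) (RtoC (wq q n / wq q (n - 1)))
                           end).
Proof.
  split; [exact (part1 q)|].
  split; [exact (part2 q)|].
  split.
  - split; [exact (part3a q)|].
    split.
    + split; [apply dense|]. split; [intros g [_ H]; exact H|].
      split; [intros f g _ _; apply symm|].
      intros g h Hg Hh H. apply maximal; auto.
    + split; [apply posop; auto|].
      split; [apply dom_equiv; auto|].
      intros f _. apply adag_a_Tmax.
  - intros f _ _. apply functional_extensionality; intros [|m]; reflexivity.
Qed.
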